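(* Let $n$ be a prime and let $g_1,g_2$ be two generators of $U(\mathbb Z/n\mathbb Z)$. Let $C$ be a circulant matrix of order $n$ and set $A=Q_{g_1}C$ and $B=Q_{g_2}C$ (a $g_1$-circulant and a $g_2$-circulant matrix, respectively). Then $A$ and $B$ have the same eigenvalues. In particular, if $g_1^{-1}$ denotes the inverse of $g_1$ modulo $n$, then $Q_{g_1}C$ and $Q_{g_1^{-1}}C$ have the same eigenvalues.
   Context: $Q_h$ is the $n\times n$ permutation matrix whose $(i,j)$ entry is $1$ if $j\equiv 1+(i-1)h\pmod n$ (indices in $\{1,\dots,n\}$) and $0$ otherwise. A circulant matrix $circ(c_1,\dots,c_n)$ has $(i,j)$ entry $c_{j-i+1}$ (subscripts mod $n$); an $h$-circulant matrix is one in which each row is the preceding row cyclically shifted $h$ places to the right. *)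

(* Defs.v *)
From HB Require Import structures.
From mathcomp Require Import all_boot all_order all_algebra all_field.
Set Implicit Arguments. Unset Strict Implicit. Unset Printing Implicit Defensive.
Import GRing.Theory Num.Theory.
Local Open Scope ring_scope.

(* Indices are 0-based: row/column i : 'I_n corresponds to index i+1 of the paper. *)

Lemma ord_pos n (i : 'I_n) : (0 < n)%N.
Proof. exact: (leq_ltn_trans (leq0n i) (ltn_ord i)). Qed.

(* Q_h : (i,j) entry (1-based) is 1 iff j = 1 + (i-1) h mod n;
   0-based: j = i * h mod n. *)
Definition Qmx (R : nzRingType) (n h : nat) : 'M[R]_n :=
  \matrix_(i < n, j < n) ((nat_of_ord j == (i * h) %% n)%N)%:R.

(* circ(c_1,...,c_n): (i,j) entry c_{j-i+1} (1-based, mod n);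
   0-based with c : 'I_n -> R (c k = c_{k+1}): entry c ((j - i) mod n). *)
Definition circ (R : nzRingType) (n : nat) (c : 'I_n -> R) : 'M[R]_n :=
  \matrix_(i < n, j < n) c (Ordinal (ltn_pmod (j + n - i) (ord_pos i))).

Definition unit_generator (n g : nat) : bool :=
  coprime g n &&
  [forall u : 'I_n, coprime u n ==> [exists k : 'I_n, (g ^ k %% n == u)%N]].

(* Main.v *)
Require Import Defs.
From HB Require Import structures.
From mathcomp Require Import all_boot all_order all_algebra all_field.
From mathcomp Require Import zify ring lra fingroup perm cyclic.
Set Implicit Arguments. Unset Strict Implicit. Unset Printing Implicit Defensive.
Import GRing.Theory Num.Theory.
Local Open Scope ring_scope.

Lemma sum_pick (R : nzRingType) n (F : 'I_n -> R) a (Ha : (a < n)%N) :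
  \sum_(j < n) F j * ((nat_of_ord j == a)%N)%:R = F (Ordinal Ha).
Proof.
rewrite (bigD1 (Ordinal Ha)) //= eqxx mulr1 big1 ?addr0 // => j Hj.
have -> : (nat_of_ord j == a) = false.
  by apply/negbTE; apply: contra Hj => /eqP E; apply/eqP; apply: val_inj.
by rewrite mulr0.
Qed.

Definition Gmx n (w : algC) : 'M[algC]_n := \matrix_(i < n, j < n) w ^+ (i * j).
Definition lam n (c : 'I_n -> algC) (w : algC) (l : nat) := \sum_(k < n) c k * w ^+ (k * l).
Definition Dmx n (c : 'I_n -> algC) w : 'M[algC]_n := diag_mx (\row_(l < n) lam c w l).

Lemma QG n h w : n.-primitive_root w ->
  Qmx algC n h *m Gmx n w = Gmx n w *m (Qmx algC n h)^T.
Proof.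
move=> Hw; apply/matrixP => i l; rewrite !mxE.
have Hn : (0 < n)%N := ord_pos i.
under eq_bigr do rewrite !mxE mulrC.
rewrite (sum_pick _ (ltn_pmod _ Hn)) /=.
under eq_bigr do rewrite !mxE.
rewrite (sum_pick _ (ltn_pmod _ Hn)) /=.
rewrite -(prim_expr_mod Hw) modnMml -[RHS](prim_expr_mod Hw) modnMmr.
by rewrite mulnAC mulnA.
Qed.

Lemma modsub1 n k i : (k < n)%N -> (i < n)%N -> (((k + i) %% n + n - i) %% n = k)%N.
Proof.
move=> Hk Hi; rewrite -addnBA; last exact: ltnW.
rewrite modnDml.
have -> : (k + i + (n - i) = k + n)%N by lia.
by rewrite modnDr modn_small.
Qed.

Lemma modsub2 n j i : (j < n)%N -> (i < n)%N -> (((j + n - i) %% n + i) %% n = j)%N.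
Proof.
move=> Hj Hi; rewrite modnDml.
have -> : (j + n - i + i = j + n)%N by lia.
by rewrite modnDr modn_small.
Qed.

Lemma circG n (c : 'I_n -> algC) w : n.-primitive_root w ->
  circ c *m Gmx n w = Gmx n w *m Dmx c w.
Proof.
move=> Hw; apply/matrixP => i l.
have Hn : (0 < n)%N := ord_pos i.
rewrite /Dmx mul_mx_diag !mxE.
pose f (k : 'I_n) : 'I_n := Ordinal (ltn_pmod (k + i) Hn).
pose g (k : 'I_n) : 'I_n := Ordinal (ltn_pmod (k + n - i) Hn).
have fK : cancel f g by move=> k; apply: val_inj; rewrite /= modsub1.
have gK : cancel g f by move=> k; apply: val_inj; rewrite /= modsub2.
rewrite (reindex f); last by exists g => k _.
rewrite /lam mulr_sumr; apply: eq_bigr => k _; rewrite !mxE.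
have -> : Ordinal (ltn_pmod (f k + n - i) (ord_pos i)) = k.
  by apply: val_inj; rewrite /= modsub1.
rewrite /= -(prim_expr_mod Hw) modnMml prim_expr_mod // mulnDl exprD.
by rewrite [w ^+ (k * l) * _]mulrC mulrCA.
Qed.

Lemma G_unit n w : n.-primitive_root w -> Gmx n w \in unitmx.
Proof.
move=> Hw.
have -> : Gmx n w = Vandermonde n (\row_(j < n) w ^+ j).
  by apply/matrixP => i j; rewrite !mxE -exprM mulnC.
rewrite unitmxE unitfE det_Vandermonde.
apply/prodf_neq0 => i _; apply/prodf_neq0 => j Hij.
rewrite !mxE subr_eq0 (eq_prim_root_expr Hw) !modn_small //.
by rewrite gtn_eqF.
Qed.
Lemma modS_cases a n : (a < n)%N -> (a.+1 %% n = a.+1 /\ a.+1 < n \/ a.+1 %% n = 0 /\ a.+1 = n)%N.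
Proof.
move=> Han; case: (ltnP a.+1 n) => H; first by left; rewrite modn_small.
right; have E : a.+1 = n by apply/eqP; rewrite eqn_leq H Han.
by rewrite E modnn.
Qed.

Lemma det_cyc (R : comNzRingType) (x : R) (L : nat) (w : 'I_L.+1 -> R) :
  \det (\matrix_(s < L.+1, t < L.+1)
          (x *+ (s == t) - w s *+ (nat_of_ord t == (s.+1 %% L.+1))%N))
  = x ^+ L.+1 - \prod_s w s.
Proof.
case: L w => [|k] w.
  by rewrite det_mx11 mxE big_ord1 expr1 modnn.
rewrite (expand_det_col _ ord0) big_ord_recl big_ord_recr /=.
rewrite big1 ?add0r; last first.
  move=> i _; rewrite !mxE /=.
  have -> : (0 == (bump 0 i).+1 %% k.+2)%N = false.
    rewrite modn_small //= /bump /=; rewrite ltnS; case: i => i /= Hi; lia.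
  by rewrite mulr0n subr0 mul0r.
rewrite !mxE /=.
have -> : lift ord0 (ord_max : 'I_k.+1) = ord_max :> 'I_k.+2 by apply: val_inj.
rewrite /= modnn eqxx !mulr0n subr0 sub0r !mulr1n.
rewrite /cofactor !addn0 expr0 mul1r.
have -> : \det (row' ord0 (col' ord0 (\matrix_(s < k.+2, t < k.+2)
          (x *+ (s == t) - w s *+ (nat_of_ord t == (s.+1 %% k.+2))%N)))) = x ^+ k.+1.
  rewrite -det_tr det_trig.
    rewrite -[in RHS](card_ord k.+1) -prodr_const; apply: eq_bigr => i _.
    rewrite !mxE eqxx mulr1n /=.
    have [[-> _]|[-> _]] := modS_cases (ltn_ord (lift ord0 i)).
      by rewrite eqn_leq ltnn andbF mulr0n subr0.
    by rewrite mulr0n subr0.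
  apply/is_trig_mxP => i j Hij; rewrite !mxE /=.
  rewrite -(inj_eq val_inj) /= /bump /= !add1n eqSS (gtn_eqF Hij) mulr0n sub0r.
  have Hj1 : (j.+1 < k.+2)%N by rewrite ltnS (ltn_ord j).
  have [[-> _]|[-> _]] := modS_cases Hj1; last by rewrite mulr0n oppr0.
  have -> : (i.+1 == j.+2)%N = false by apply/negbTE; rewrite neq_ltn ltnS ltnW.
  by rewrite mulr0n oppr0.


have -> : \det (row' ord_max (col' ord0 (\matrix_(s < k.+2, t < k.+2)
          (x *+ (s == t) - w s *+ (nat_of_ord t == (s.+1 %% k.+2))%N))))
   = \prod_(s < k.+1) (- w (widen_ord (leqnSn _) s)).
  rewrite det_trig.
    apply: eq_bigr => i _; rewrite !mxE /=.
    have -> : lift ord_max i = widen_ord (leqnSn _) i by apply: val_inj; rewrite /= /bump leqNgt ltn_ord.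
    rewrite /= /bump /= ltnNge -ltnS ltn_ord /= add0n modn_small ?ltnS ?add1n ?eqxx ?mulr1n //; last by rewrite -ltnS.
    have -> : (widen_ord (leqnSn k.+1) i == lift ord0 i) = false.
      by rewrite -(inj_eq val_inj) /= /bump /= add1n eqn_leq ltnn andbF.
    by rewrite mulr0n sub0r.

  apply/is_trig_mxP => i j Hij; rewrite !mxE /=.
  have -> : lift ord_max i = widen_ord (leqnSn _) i by apply: val_inj; rewrite /= /bump leqNgt ltn_ord.
  rewrite /= /bump /= ltnNge -ltnS ltn_ord /= add0n modn_small ?ltnS; last by rewrite -ltnS.
  rewrite -(inj_eq val_inj) /= /bump /= !add1n eqSS (gtn_eqF Hij).
  have -> : (nat_of_ord i == j.+1)%N = false by apply/negbTE; rewrite neq_ltn ltnS ltnW.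
  by rewrite !mulr0n subr0.



rewrite prodrN [in RHS]big_ord_recr /= card_ord.
rewrite -exprS [(-1) ^+ _ * (_ * _)]mulrA -exprD -signr_odd oddD addbb expr0 mul1r.
by rewrite mulNr mulrC.
Qed.

Lemma det_permconj (R : comNzRingType) n (f : 'S_n) (M : 'M[R]_n) :
  \det (\matrix_(s, t) M (f s) (f t)) = \det M.
Proof.
have -> : \matrix_(s, t) M (f s) (f t) = row_perm f (col_perm f M).
  by apply/matrixP => i j; rewrite !mxE.
rewrite row_permE col_permE !det_mulmx mulrCA -det_mulmx -perm_mxM mulgV perm_mx1 det1.
by rewrite mulr1.
Qed.

Lemma char_poly_tr (R : comNzRingType) n (A : 'M[R]_n) : char_poly A^T = char_poly A.
Proof.
rewrite /char_poly -det_tr; congr (\det _).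
by apply/matrixP => i j; rewrite !mxE eq_sym.
Qed.

Lemma char_poly_sim (F : fieldType) n (A B G : 'M[F]_n) :
  G \in unitmx -> A *m G = G *m B -> char_poly A = char_poly B.
Proof.
move=> HG E.
pose Gp := map_mx (@polyC F) G.
have E2 : char_poly_mx A *m Gp = Gp *m char_poly_mx B.
  rewrite /char_poly_mx mulmxBl mulmxBr -!map_mxM E.
  by rewrite mul_scalar_mx mul_mx_scalar.
have := congr1 determinant E2; rewrite !det_mulmx mulrC => /mulfI; apply.
rewrite det_map_mx polyC_eq0; move: HG; rewrite unitmxE unitfE; done.
Qed.

Lemma cp_DQ n (c : 'I_n -> algC) w h : n.-primitive_root w ->
  char_poly (Qmx algC n h *m circ c) = char_poly (Dmx c w *m Qmx algC n h).
Proof.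
move=> Hw.
rewrite (char_poly_sim (G_unit Hw) (B := (Qmx algC n h)^T *m Dmx c w)).
  by rewrite -char_poly_tr trmx_mul trmxK /Dmx tr_diag_mx.
by rewrite -mulmxA circG // !mulmxA QG.
Qed.

Section Gen.
Variables (k h : nat).
Local Notation n := k.+2.
Hypothesis (Hp : prime n) (Hg : unit_generator n h).

Lemma hcop : coprime h n.
Proof. by case/andP: Hg. Qed.

Lemma hpos t : (0 < h ^ t %% n)%N.
Proof.
rewrite lt0n; apply/eqP => E.
have := coprimeXl t hcop; rewrite -coprime_modl E /coprime gcd0n.
by [].
Qed.

Lemma hEuler : (h ^ k.+1 %% n = 1)%N.
Proof.
have := Euler_exp_totient hcop; rewrite totient_prime //= => ->.
Qed.

Lemma hmodexp m : (h ^ m %% n = h ^ (m %% k.+1) %% n)%N.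
Proof.
rewrite {1}(divn_eq m k.+1) expnD [(_ * k.+1)%N]mulnC expnM -modnMml -modnXm hEuler exp1n.
by rewrite (modn_small (isT : (1 < n)%N)) mul1n.
Qed.

Lemma e_lt (t : 'I_k.+1) : ((h ^ t %% n).-1 < k.+1)%N.
Proof.
have := hpos t; have := ltn_pmod (h ^ t) (isT : (0 < n)%N).
by case: (h ^ t %% n)%N.
Qed.

Definition e (t : 'I_k.+1) : 'I_k.+1 := Ordinal (e_lt t).

Lemma eS t : ((e t).+1 = h ^ t %% n)%N.
Proof. by rewrite /= prednK // hpos. Qed.

Lemma e_surj s : exists t, e t = s.
Proof.
have Hs : (s.+1 < n)%N by rewrite ltnS ltn_ord.
have Hc : coprime (Ordinal Hs) n.
  by rewrite coprime_sym prime_coprime // gtnNdvd.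
case/andP: Hg => _ /forallP /(_ (Ordinal Hs)); rewrite Hc /= => /existsP [t0 /eqP Ht0].
case: (ltnP t0 k.+1) => Ht.
  by exists (Ordinal Ht); apply: val_inj; rewrite /= Ht0.
have Et : nat_of_ord t0 = k.+1 by apply/eqP; rewrite eqn_leq Ht andbT -ltnS ltn_ord.
move: Ht0; rewrite Et hEuler => /eqP; rewrite eq_sym eqSS => /eqP Es.
by exists ord0; apply: val_inj; rewrite /= Es.
Qed.

Lemma e_inj : injective e.
Proof.
pose g (s : 'I_k.+1) : 'I_k.+1 := odflt ord0 [pick t | e t == s].
have gK : cancel g e.
  move=> s; rewrite /g; case: pickP => [t /eqP //|].
  by case: (e_surj s) => t Ht /(_ t); rewrite Ht eqxx.
have [g' g'g gg'] := injF_bij (can_inj gK).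
have eg' : e =1 g'.
  by move=> x; rewrite -{1}(gg' x) gK.
apply: (can_inj (g := g)) => x.
by rewrite eg' gg'.
Qed.

Lemma hpow_eq (a b : 'I_k.+1) : (h ^ a %% n == h ^ b %% n)%N = (a == b).
Proof.
by rewrite -!eS eqSS -(inj_eq e_inj).
Qed.

Lemma cp_gen (c : 'I_n -> algC) w :
  char_poly (Dmx c w *m Qmx algC n h) =
  ('X - (lam c w 0)%:P) * ('X ^+ k.+1 - (\prod_(s < k.+1) lam c w s.+1)%:P).
Proof.
set M := Dmx c w *m Qmx algC n h.
have ME : forall i j, M i j = lam c w i * ((nat_of_ord j == (i * h) %% n)%N)%:R.
  by move=> i j; rewrite /M /Dmx mul_diag_mx !mxE.
clearbody M.
rewrite /char_poly (expand_det_row _ ord0) [in LHS]big_ord_recl big1 ?addr0; last first.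
  move=> j _; rewrite /char_poly_mx !mxE ME mul0n mod0n lift0 /=.
  by rewrite mulr0 subr0 mul0r.
rewrite /char_poly_mx !mxE ME mul0n mod0n eqxx mulr1 mulr1n.
rewrite /cofactor row'_col'_char_poly_mx addn0 expr0 mul1r; congr (_ * _).
rewrite -(det_permconj (perm e_inj)).
set M' := row' ord0 (col' ord0 M).
have -> : \matrix_(s, t) char_poly_mx M' (perm e_inj s) (perm e_inj t) =
    \matrix_(s < k.+1, t < k.+1) ('X *+ (s == t) -
        (lam c w (h ^ s %% n))%:P *+ (nat_of_ord t == (s.+1 %% k.+1))%N).
  apply/matrixP => s t; rewrite /char_poly_mx !mxE !permE (inj_eq e_inj).
  rewrite ME !lift0 !eS modnMml -expnSr (hmodexp s.+1).
  have Hr : (s.+1 %% k.+1 < k.+1)%N by rewrite ltn_mod.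
  by rewrite (hpow_eq t (Ordinal Hr)) mulr_natr polyCMn.
rewrite (det_cyc 'X (fun s : 'I_k.+1 => (lam c w (h ^ s %% n))%:P)) rmorph_prod; congr (_ - _).
rewrite [in RHS](reindex_inj e_inj) /=; apply: eq_bigr => s _.
by rewrite eS.
Qed.

End Gen.

Lemma inv_gen k g gi : prime k.+2 -> unit_generator k.+2 g ->
  (g * gi = 1 %[mod k.+2])%N -> unit_generator k.+2 gi.
Proof.
move=> Hp Hg Hinv.
have Hcg := hcop Hg.
have H1n : (1 %% k.+2 = 1)%N by rewrite modn_small.
have Hgg : ((gi * g) %% k.+2 = 1)%N by rewrite mulnC Hinv.
apply/andP; split.
  have : coprime (gi * g) k.+2 by rewrite -coprime_modl Hgg /coprime gcd1n.
  by rewrite coprimeMl => /andP [].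
apply/forallP => u; apply/implyP => Hu.
case/andP: (Hg) => _ /forallP /(_ u); rewrite Hu /= => /existsP [k0 /eqP Hk0].
set r := (k0 %% k.+1)%N.
have Hr : (r <= k.+1)%N by rewrite ltnW // ltn_mod.
have Ht : (k.+1 - r < k.+2)%N by rewrite ltnS leq_subr.
apply/existsP; exists (Ordinal Ht); apply/eqP => /=.
set t := (k.+1 - r)%N.
have E1 : ((g ^ r * g ^ t) %% k.+2 = 1)%N by rewrite -expnD subnKC // (hEuler Hp Hg).
have E2 : ((gi * g) ^ t %% k.+2 = 1)%N by rewrite -modnXm Hgg exp1n.
rewrite -[(gi ^ t)%N]muln1 -E1 modnMmr mulnCA -expnMn -modnMmr E2 muln1.
by rewrite -(hmodexp Hp Hg) Hk0.
Qed.

Unset Implicit Arguments.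
Set Strict Implicit.

Theorem mainTheorem7 (n g1 g2 : nat) (c : 'I_n -> algC) :
  prime n -> unit_generator n g1 -> unit_generator n g2 ->
  char_poly (Qmx algC n g1 *m circ c) = char_poly (Qmx algC n g2 *m circ c)
  /\ (forall g1inv : nat, (g1 * g1inv = 1 %[mod n])%N ->
       char_poly (Qmx algC n g1 *m circ c)
       = char_poly (Qmx algC n g1inv *m circ c)).
Proof.
case: n c => [|[|k]] c Hp; try by [].
move=> G1 G2.
have [w Hw] := C_prim_root_exists (isT : (0 < k.+2)%N).
rewrite !(cp_DQ _ _ Hw) (cp_gen Hp G1) (cp_gen Hp G2); split => // gi Hgi.
by rewrite (cp_DQ _ _ Hw) (cp_gen Hp (inv_gen Hp G1 Hgi)).
Qed.
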